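(* Consider a classical elementary system with timelike four-momentum and non-zero spin, in explicit form (ii). Let $\mathbf A\colon\Gamma\to\mathbb R^3$ be $C^1$, invariant under spatial translations ($\{P_a,A_b\}=0$), transforming as a vector under spatial rotations ($\{J_{ab},A_c\}=\delta_{ac}A_b-\delta_{bc}A_a$), and satisfying $\mathbf A\cdot\mathbf P=0$. Then on $\Gamma^*\setminus\{\mathbf s\parallel\hat{\mathbf P}\}$ one has $$\mathbf A=B\,\hat{\mathbf P}\times\mathbf s+C\,\hat{\mathbf P}\times(\hat{\mathbf P}\times\mathbf s),$$ where $B=B(|\mathbf P|,\hat{\mathbf P}\cdot\mathbf s)$ and $C=C(|\mathbf P|,\hat{\mathbf P}\cdot\mathbf s)$ for $C^1$ functions $B,C\colon\mathbb R_+\times(-S,S)\to\mathbb R$.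
   Context: Fix a positively oriented orthonormal basis $\{e_0,\dots,e_3\}$ of Minkowski space (signature $(-,+,+,+)$), speed of light $c>0$, $m>0$, $S>0$. Spatial indices raised/lowered with Kronecker delta; ${}^{(3)}\varepsilon_{abc}$ Levi-Civita symbol; $\mathbf A\cdot\mathbf B=A_aB^a$, $(\mathbf A\times\mathbf B)_a={}^{(3)}\varepsilon_{abc}A^bB^c$. Poisson bracket: $\omega(X_f,\cdot)=df$, $\{f,g\}=\omega(X_f,X_g)$. Form (ii): $\Gamma=T^*\mathbb R^3\times\mathsf S^2\ni(\mathbf x,\mathbf p,\hat{\mathbf s})$, $\omega=dx^a\wedge dp_a+S\,d\Omega^2$; $\mathbf s=S\hat{\mathbf s}$, $\{s_a,s_b\}={}^{(3)}\varepsilon_{abc}s^c$, $\mathbf s$ Poisson-commuting with $\mathbf x,\mathbf p$; $P_a=p_a$, $P_0=-\sqrt{m^2c^2+\mathbf p^2}$, $J_{ab}=x_ap_b-x_bp_a+{}^{(3)}\varepsilon_{abc}s^c$, $J_{a0}=P_0x_a-\frac{(\mathbf p\times\mathbf s)_a}{mc-P_0}$. $\Gamma^*=\Gamma\setminus\{|\mathbf P|=0\}$, $\hat{\mathbf P}=\mathbf P/|\mathbf P|$; $\{\mathbf s\parallel\hat{\mathbf P}\}$ is the set where $\mathbf s$ is parallel or antiparallel to $\hat{\mathbf P}$. *)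

(* Defs.v *)
From HB Require Import structures.
From mathcomp Require Import all_boot all_order all_algebra.
From mathcomp Require Import all_classical all_reals all_analysis.
Set Implicit Arguments. Unset Strict Implicit. Unset Printing Implicit Defensive.
Import Order.TTheory GRing.Theory Num.Theory.
Import numFieldNormedType.Exports.
Local Open Scope classical_set_scope.
Local Open Scope ring_scope.

Notation vec R := 'rV[R]_3.
(* ambient coordinates (x, p, s) of Gamma = T^*R^3 x S^2; the point lies in
   Gamma iff |s| = S *)
Definition PS (R : realType) := (vec R * vec R * vec R)%type.

Section Defs.
Variable R : realType.

Definition xof (z : PS R) : vec R := z.1.1.
Definition pof (z : PS R) : vec R := z.1.2.
Definition sof (z : PS R) : vec R := z.2.

(* Kronecker delta and Levi-Civita symbol (eps 0 1 2 = 1) *)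
Definition kdelta (a b : 'I_3) : R := (a == b)%:R.
Definition leviC (a b c : 'I_3) : R :=
  ((b%:R - a%:R) * (c%:R - a%:R) * (c%:R - b%:R)) / 2.

Definition dot (u v : vec R) : R := \sum_(i < 3) u 0 i * v 0 i.
Definition enorm (u : vec R) : R := Num.sqrt (dot u u).
Definition cross (u v : vec R) : vec R :=
  \row_(a < 3) \sum_(b < 3) \sum_(c < 3) leviC a b c * u 0 b * v 0 c.

Definition ex (i : 'I_3) : PS R := (delta_mx 0 i, 0, 0).
Definition ep (i : 'I_3) : PS R := (0, delta_mx 0 i, 0).
Definition es (i : 'I_3) : PS R := (0, 0, delta_mx 0 i).

(* Poisson bracket of form (ii):
   {f,g} = d_x f . d_p g - d_p f . d_x g + s . (d_s f x d_s g),
   which gives {x^a,p_b} = delta_ab, {s_a,s_b} = eps_abc s^c, and s Poisson-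
   commuting with x, p.  Only the tangential part of d_s matters on |s|=S. *)
Definition pb (f g : PS R -> R) (z : PS R) : R :=
  \sum_(i < 3) ('D_(ex i) f z * 'D_(ep i) g z - 'D_(ep i) f z * 'D_(ex i) g z)
  + \sum_(a < 3) \sum_(b < 3) \sum_(c < 3)
      leviC a b c * sof z 0 a * 'D_(es b) f z * 'D_(es c) g z.

Definition Pgen (a : 'I_3) (z : PS R) : R := pof z 0 a.
Definition Jgen (a b : 'I_3) (z : PS R) : R :=
  xof z 0 a * pof z 0 b - xof z 0 b * pof z 0 a
  + \sum_(c < 3) leviC a b c * sof z 0 c.

Definition Gamma (S : R) : set (PS R) := [set z | enorm (sof z) = S].
(* Gamma^* minus {s parallel or antiparallel to P-hat} *)
Definition phat (z : PS R) : vec R := (enorm (pof z))^-1 *: pof z.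
Definition s_parallel_Phat (z : PS R) : Prop :=
  exists k : R, sof z = k *: phat z.
Definition Gamma_good (S : R) : set (PS R) :=
  [set z | Gamma S z /\ enorm (pof z) != 0 /\ ~ s_parallel_Phat z].

End Defs.

Definition C1_on (R : realType) (V W : normedModType R) (U : set V) (f : V -> W)
  : Prop :=
  open U /\ (forall z, U z -> differentiable f z) /\
  (forall v z, U z -> {for z, continuous (fun w => 'D_v f w)}).

Arguments kdelta {R}. Arguments leviC {R}. Arguments ex {R}. Arguments ep {R}.
Arguments es {R}. Arguments Pgen {R}. Arguments Jgen {R}.

(* Main.v *)
Require Import Defs.
From HB Require Import structures.
From mathcomp Require Import all_boot all_order all_algebra.
From mathcomp Require Import all_classical all_reals all_analysis.
From mathcomp Require Import ring lra.
Set Implicit Arguments. Unset Strict Implicit. Unset Printing Implicit Defensive.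
Import Order.TTheory GRing.Theory Num.Theory.
Import numFieldNormedType.Exports.
Local Open Scope classical_set_scope.
Local Open Scope ring_scope.


Section H.
Variable R : realType.
Notation o0 := (@Ordinal 3 0 isT).
Notation o1 := (@Ordinal 3 1 isT).
Notation o2 := (@Ordinal 3 2 isT).

Lemma sum3 (F : 'I_3 -> R) : \sum_(i < 3) F i = F o0 + F o1 + F o2.
Proof.
rewrite !big_ord_recr big_ord0 /= add0r.
by congr (F _ + F _ + F _); apply: val_inj.
Qed.

Lemma levi_sum3 (F : 'I_3 -> 'I_3 -> 'I_3 -> R) :
  \sum_(a < 3) \sum_(b < 3) \sum_(c < 3) leviC a b c * F a b c =
  F o0 o1 o2 + F o1 o2 o0 + F o2 o0 o1 - F o0 o2 o1 - F o2 o1 o0 - F o1 o0 o2.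
Proof.
rewrite !sum3 /leviC /=.
lra.
Qed.

Lemma is_derive_lin (V W : normedModType R) (f : V -> W)
  (hf : forall (a : R) u v, f (a *: u + v) = a *: f u + f v) x v :
  is_derive x v f (f v).
Proof.
have fdef : forall h : R, h != 0 -> h^-1 *: ((f \o shift x) (h *: v) - f x) = f v.
  move=> h h0 /=; rewrite /shift hf addrK scalerA mulVf // scale1r //.
have hn : {near (0:R)^', (cst (f v)) =1
     (fun h : R => h^-1 *: ((f \o shift x) (h *: v) - f x))}.
  near=> h; rewrite /= fdef //; near: h; exact: nbhs_dnbhs_neq.
have cv : (fun h : R => h^-1 *: ((f \o shift x) (h *: v) - f x)) @ (0:R)^' --> f v.
  exact: (cvg_trans (near_eq_cvg hn) (cvg_cst _)).
apply: DeriveDef; first by apply/cvg_ex; exists (f v).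
exact: cvg_lim.
Unshelve. all: by end_near.
Qed.

Lemma Dv (V W : normedModType R) (f : V -> W) a v df :
  is_derive a v f df -> 'D_v f a = df.
Proof. by move=> H; apply: derive_val. Qed.
Lemma scaleRE (k x : R) : k *: x = k * x. Proof. by []. Qed.

Definition xc (i : 'I_3) : PS R -> R := fun z => xof z 0 i.
Definition pc (i : 'I_3) : PS R -> R := fun z => pof z 0 i.
Definition sc (i : 'I_3) : PS R -> R := fun z => sof z 0 i.

Lemma is_derive_xc i (z v : PS R) : is_derive z v (xc i) (xof v 0 i).
Proof. by apply: is_derive_lin => a u w; rewrite /xc /xof /= !mxE. Qed.
Lemma is_derive_pc i (z v : PS R) : is_derive z v (pc i) (pof v 0 i).
Proof. by apply: is_derive_lin => a u w; rewrite /pc /pof /= !mxE. Qed.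
Lemma is_derive_sc i (z v : PS R) : is_derive z v (sc i) (sof v 0 i).
Proof. by apply: is_derive_lin => a u w; rewrite /sc /sof /= !mxE. Qed.

Lemma DJ a b (z v : PS R) : 'D_v (Jgen a b) z =
  xof v 0 a * pof z 0 b + xof z 0 a * pof v 0 b
  - (xof v 0 b * pof z 0 a + xof z 0 b * pof v 0 a)
  + \sum_(c < 3) leviC a b c * sof v 0 c.
Proof.
have lin : is_derive z v (fun w : PS R => \sum_(c < 3) leviC a b c * sof w 0 c)
   (\sum_(c < 3) leviC a b c * sof v 0 c).
  apply: is_derive_lin => k u w; rewrite /sof /= scaler_sumr -big_split /=.
  apply: eq_bigr => c _; rewrite !mxE !scaleRE; ring.
have -> : Jgen a b = (xc a * pc b - xc b * pc a) +
    (fun w : PS R => \sum_(c < 3) leviC a b c * sof w 0 c).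
  by apply/funext => w.
have dxa := is_derive_xc a z v; have dxb := is_derive_xc b z v.
have dpa := is_derive_pc a z v; have dpb := is_derive_pc b z v.
rewrite deriveD; last 2 first.
- apply: derivableB; exact: derivableM.
- exact: ex_derive.
rewrite deriveB; try exact: derivableM.
rewrite !deriveM // (Dv dxa) (Dv dxb) (Dv dpa) (Dv dpb) (Dv lin) !scaleRE /xc /pc /=.
ring.
Qed.

Lemma alg1 (s0 s1 s2 a0 a1 a2 b0 b1 b2 : R) :
  s0*(a1*b2)+s1*(a2*b0)+s2*(a0*b1) - s0*(a2*b1) - s2*(a1*b0) - s1*(a0*b2)
  = s0*(a1*b2-a2*b1)+s1*(a2*b0-a0*b2)+s2*(a0*b1-a1*b0).
Proof. ring. Qed.

Lemma pbE (f g : PS R -> R) (z : PS R) : pb f g z =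
  ('D_(ex o0) f z * 'D_(ep o0) g z - 'D_(ep o0) f z * 'D_(ex o0) g z)
  + ('D_(ex o1) f z * 'D_(ep o1) g z - 'D_(ep o1) f z * 'D_(ex o1) g z)
  + ('D_(ex o2) f z * 'D_(ep o2) g z - 'D_(ep o2) f z * 'D_(ex o2) g z)
  + (sof z 0 o0 * ('D_(es o1) f z * 'D_(es o2) g z - 'D_(es o2) f z * 'D_(es o1) g z)
   + sof z 0 o1 * ('D_(es o2) f z * 'D_(es o0) g z - 'D_(es o0) f z * 'D_(es o2) g z)
   + sof z 0 o2 * ('D_(es o0) f z * 'D_(es o1) g z - 'D_(es o1) f z * 'D_(es o0) g z)).
Proof.
rewrite /pb sum3.
under eq_bigr do under eq_bigr do under eq_bigr do rewrite -2!mulrA.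
have L := levi_sum3 (fun a b c => sof z 0 a * ('D_(es b) f z * 'D_(es c) g z)).
cbv beta in L; rewrite L.
congr (_ + _); exact: alg1.
Qed.

Lemma xof_ex i j : xof (ex i : PS R) 0 j = (j == i)%:R.
Proof. by rewrite /xof /ex /= mxE eqxx. Qed.
Lemma pof_ex i j : pof (ex i : PS R) 0 j = 0.
Proof. by rewrite /pof /ex /= mxE. Qed.
Lemma sof_ex i j : sof (ex i : PS R) 0 j = 0.
Proof. by rewrite /sof /ex /= mxE. Qed.
Lemma xof_ep i j : xof (ep i : PS R) 0 j = 0.
Proof. by rewrite /xof /ep /= mxE. Qed.
Lemma pof_ep i j : pof (ep i : PS R) 0 j = (j == i)%:R.
Proof. by rewrite /pof /ep /= mxE eqxx. Qed.
Lemma sof_ep i j : sof (ep i : PS R) 0 j = 0.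
Proof. by rewrite /sof /ep /= mxE. Qed.
Lemma xof_es i j : xof (es i : PS R) 0 j = 0.
Proof. by rewrite /xof /es /= mxE. Qed.
Lemma pof_es i j : pof (es i : PS R) 0 j = 0.
Proof. by rewrite /pof /es /= mxE. Qed.
Lemma sof_es i j : sof (es i : PS R) 0 j = (j == i)%:R.
Proof. by rewrite /sof /es /= mxE eqxx. Qed.

Lemma sum_delta (F : 'I_3 -> R) i : \sum_(c < 3) F c * (c == i)%:R = F i.
Proof.
rewrite (bigD1 i) //= eqxx mulr1 big1 ?addr0 // => c /negbTE ->.
by rewrite mulr0.
Qed.

Lemma DJex a b i (z : PS R) :
  'D_(ex i) (Jgen a b) z = (a == i)%:R * pof z 0 b - (b == i)%:R * pof z 0 a.
Proof.
rewrite DJ !xof_ex ?pof_ex.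
under eq_bigr do rewrite sof_ex.
rewrite big1 => [|c _]; last by rewrite mulr0.
by rewrite !mulr0 !addr0.
Qed.
Lemma DJep a b i (z : PS R) :
  'D_(ep i) (Jgen a b) z = xof z 0 a * (b == i)%:R - xof z 0 b * (a == i)%:R.
Proof.
rewrite DJ !xof_ep ?pof_ep.
under eq_bigr do rewrite sof_ep.
rewrite big1 => [|c _]; last by rewrite mulr0.
by rewrite !mul0r !add0r !addr0.
Qed.
Lemma DJes a b i (z : PS R) : 'D_(es i) (Jgen a b) z = leviC a b i.
Proof.
rewrite DJ !xof_es ?pof_es.
under eq_bigr do rewrite sof_es.
by rewrite sum_delta !mul0r !mulr0 !addr0 subrr add0r.
Qed.

Lemma e01 : (o0 == o1) = false. Proof. by []. Qed.
Lemma e02 : (o0 == o2) = false. Proof. by []. Qed.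
Lemma e10 : (o1 == o0) = false. Proof. by []. Qed.
Lemma e12 : (o1 == o2) = false. Proof. by []. Qed.
Lemma e20 : (o2 == o0) = false. Proof. by []. Qed.
Lemma e21 : (o2 == o1) = false. Proof. by []. Qed.
Lemma l012 : leviC o0 o1 o0 = 0 :> R /\ leviC o0 o1 o1 = 0 :> R /\ leviC o0 o1 o2 = 1 :> R.
Proof. by rewrite /leviC /=; split; [|split]; lra. Qed.
Lemma l120 : leviC o1 o2 o0 = 1 :> R /\ leviC o1 o2 o1 = 0 :> R /\ leviC o1 o2 o2 = 0 :> R.
Proof. by rewrite /leviC /=; split; [|split]; lra. Qed.

Lemma pbJ01 (g : PS R -> R) (z : PS R) : pb (Jgen o0 o1) g z =
  pof z 0 o1 * 'D_(ep o0) g z - pof z 0 o0 * 'D_(ep o1) g z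
  + xof z 0 o1 * 'D_(ex o0) g z - xof z 0 o0 * 'D_(ex o1) g z
  + sof z 0 o1 * 'D_(es o0) g z - sof z 0 o0 * 'D_(es o1) g z.
Proof.
have [L0 [L1 L2]] := l012.
rewrite pbE !DJex !DJep !DJes L0 L1 L2 !eqxx ?e01 ?e02 ?e10 ?e12 ?e20 ?e21.
have t1 : true%:R = 1 :> R by []. have f0 : false%:R = 0 :> R by [].
rewrite t1 f0.
move: ('D_(ep o0) g z) ('D_(ep o1) g z) ('D_(ep o2) g z) => d0 d1 d2.
move: ('D_(ex o0) g z) ('D_(ex o1) g z) ('D_(ex o2) g z) => d3 d4 d5.
move: ('D_(es o0) g z) ('D_(es o1) g z) ('D_(es o2) g z) => d6 d7 d8.
move: (pof z 0 o0) (pof z 0 o1) (xof z 0 o0) (xof z 0 o1) (sof z 0 o0) (sof z 0 o1) (sof z 0 o2).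
move=> p0 p1 x0 x1 s0 s1 s2.
ring.
Qed.

Lemma pbJ12 (g : PS R -> R) (z : PS R) : pb (Jgen o1 o2) g z =
  pof z 0 o2 * 'D_(ep o1) g z - pof z 0 o1 * 'D_(ep o2) g z
  + xof z 0 o2 * 'D_(ex o1) g z - xof z 0 o1 * 'D_(ex o2) g z
  + sof z 0 o2 * 'D_(es o1) g z - sof z 0 o1 * 'D_(es o2) g z.
Proof.
have [L0 [L1 L2]] := l120.
rewrite pbE !DJex !DJep !DJes L0 L1 L2 !eqxx ?e01 ?e02 ?e10 ?e12 ?e20 ?e21.
have t1 : true%:R = 1 :> R by []. have f0 : false%:R = 0 :> R by [].
rewrite t1 f0.
move: ('D_(ep o0) g z) ('D_(ep o1) g z) ('D_(ep o2) g z) => d0 d1 d2.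
move: ('D_(ex o0) g z) ('D_(ex o1) g z) ('D_(ex o2) g z) => d3 d4 d5.
move: ('D_(es o0) g z) ('D_(es o1) g z) ('D_(es o2) g z) => d6 d7 d8.
move: (pof z 0 o1) (pof z 0 o2) (xof z 0 o1) (xof z 0 o2) (sof z 0 o0) (sof z 0 o1) (sof z 0 o2).
move=> p0 p1 x0 x1 s0 s1 s2.
ring.
Qed.

Lemma ord3_cases (P : 'I_3 -> Prop) : P o0 -> P o1 -> P o2 -> forall a, P a.
Proof.
move=> h0 h1 h2 [[|[|[|n]]] H].
- by rewrite (_ : Ordinal H = o0) //; apply: val_inj.
- by rewrite (_ : Ordinal H = o1) //; apply: val_inj.
- by rewrite (_ : Ordinal H = o2) //; apply: val_inj.
- by [].
Qed.

Lemma vec3P (u v : vec R) :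
  u 0 o0 = v 0 o0 -> u 0 o1 = v 0 o1 -> u 0 o2 = v 0 o2 -> u = v.
Proof.
move=> h0 h1 h2; apply/rowP => j.
by apply: (@ord3_cases (fun j => u 0 j = v 0 j)).
Qed.

Lemma dotE (u v : vec R) : dot u v = u 0 o0 * v 0 o0 + u 0 o1 * v 0 o1 + u 0 o2 * v 0 o2.
Proof. by rewrite /dot sum3. Qed.

Lemma crossE (u v : vec R) :
  cross u v 0 o0 = u 0 o1 * v 0 o2 - u 0 o2 * v 0 o1 /\
  cross u v 0 o1 = u 0 o2 * v 0 o0 - u 0 o0 * v 0 o2 /\
  cross u v 0 o2 = u 0 o0 * v 0 o1 - u 0 o1 * v 0 o0.
Proof.
rewrite /cross !mxE !sum3 /leviC /=.
move: (u 0 o0) (u 0 o1) (u 0 o2) (v 0 o0) (v 0 o1) (v 0 o2) => a0 a1 a2 b0 b1 b2.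
split; [|split]; lra.
Qed.

Lemma pbP (g : PS R -> R) a (z : PS R) : pb (Pgen a) g z = - 'D_(ex a) g z.
Proof.
have D : forall v, 'D_v (Pgen a) z = pof v 0 a.
  by move=> v; rewrite (Dv (is_derive_pc a z v)).
rewrite pbE !D !pof_ep ?pof_ex ?pof_es.
have t1 : true%:R = 1 :> R by []. have f0 : false%:R = 0 :> R by [].
move: a D; apply: ord3_cases => D; rewrite !eqxx ?e01 ?e02 ?e10 ?e12 ?e20 ?e21 t1 f0;
move: ('D_(ep o0) g z) ('D_(ep o1) g z) ('D_(ep o2) g z) => d0 d1 d2;
move: ('D_(es o0) g z) ('D_(es o1) g z) ('D_(es o2) g z) => d6 d7 d8;
move: ('D_(ex o0) g z) ('D_(ex o1) g z) ('D_(ex o2) g z) => d3 d4 d5;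
move: (sof z 0 o0) (sof z 0 o1) (sof z 0 o2) => s0 s1 s2; ring.
Qed.

Lemma DdirD (f : PS R -> R) (z u v : PS R) : differentiable f z ->
  'D_(u + v) f z = 'D_u f z + 'D_v f z.
Proof. by move=> df; rewrite !deriveE // linearD. Qed.
Lemma DdirZ (f : PS R -> R) (z u : PS R) (k : R) : differentiable f z ->
  'D_(k *: u) f z = k * 'D_u f z.
Proof. by move=> df; rewrite !deriveE // linearZ. Qed.

Lemma chain (V : normedModType R) (f : V -> R) (W U U' : V) (g h : R -> R) (t dg dh : R) :
  is_derive t 1 g dg -> is_derive t 1 h dh ->
  differentiable f (W + g t *: U + h t *: U') ->
  is_derive t 1 (fun t => f (W + g t *: U + h t *: U'))
    ('D_(dg *: U + dh *: U') f (W + g t *: U + h t *: U')).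
Proof.
move=> Dg Dh df.
have gd : differentiable g t by apply/derivable1_diffP; exact: ex_derive.
have hd : differentiable h t by apply/derivable1_diffP; exact: ex_derive.
pose gam := (cst W + (fun r => g r *: U)) + (fun r => h r *: U').
have gamE : gam = (fun r => W + g r *: U + h r *: U') by apply/funext.
have dgam : differentiable gam t.
  apply: differentiableD; first apply: differentiableD.
  - exact: differentiable_cst.
  - exact: differentiableZl.
  - exact: differentiableZl.
have Dgam : 'd gam t 1 = dg *: U + dh *: U'.
  rewrite diffD; last 2 first.
  - apply: differentiableD; [exact: differentiable_cst | exact: differentiableZl].
  - exact: differentiableZl.
  rewrite diffD; [|exact: differentiable_cst|exact: differentiableZl].
  rewrite !diffZl // diff_cst /= !diff1E // !derive1E (Dv Dg) (Dv Dh).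
  by rewrite !scale1r add0r.
have gt : gam t = W + g t *: U + h t *: U' by [].
have -> : (fun t => f (W + g t *: U + h t *: U')) = f \o gam by rewrite gamE.
rewrite -gt in df *.
have dc : differentiable (f \o gam) t by apply: differentiable_comp.
apply: DeriveDef; first exact: diff_derivable.
by rewrite deriveE // (diff_comp dgam df) /= Dgam -deriveE.
Qed.
End H.


Section H2.
Variable R : realType.
Notation o0 := (@Ordinal 3 0 isT).
Notation o1 := (@Ordinal 3 1 isT).
Notation o2 := (@Ordinal 3 2 isT).

Definition Pv (a b : 'I_3) (y : vec R) : vec R :=
  y 0 a *: delta_mx 0 a + y 0 b *: delta_mx 0 b.
Definition Qv (a b : 'I_3) (y : vec R) : vec R :=
  (- y 0 b) *: delta_mx 0 a + y 0 a *: delta_mx 0 b.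
Definition rotv a b (c s : R) (y : vec R) : vec R :=
  y - Pv a b y + c *: Pv a b y + s *: Qv a b y.
Definition rotPS a b (c s : R) (w : PS R) : PS R :=
  (rotv a b c s (xof w), rotv a b c s (pof w), rotv a b c s (sof w)).
Definition Xg a b (w : PS R) : PS R :=
  (Qv a b (xof w), Qv a b (pof w), Qv a b (sof w)).
Definition PPS a b (w : PS R) : PS R :=
  (Pv a b (xof w), Pv a b (pof w), Pv a b (sof w)).

Definition plane (a b : 'I_3) := (a == o0) && (b == o1) || (a == o1) && (b == o2).

Lemma rot01E c s (y : vec R) :
  rotv o0 o1 c s y 0 o0 = c * y 0 o0 - s * y 0 o1 /\
  rotv o0 o1 c s y 0 o1 = s * y 0 o0 + c * y 0 o1 /\
  rotv o0 o1 c s y 0 o2 = y 0 o2.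
Proof.
rewrite /rotv /Pv /Qv !mxE !eqxx ?e01 ?e02 ?e10 ?e12 ?e20 ?e21 /=.
move: (y 0 o0) (y 0 o1) (y 0 o2) => y0 y1 y2.
by split; [|split]; ring.
Qed.

Lemma rot12E c s (y : vec R) :
  rotv o1 o2 c s y 0 o0 = y 0 o0 /\
  rotv o1 o2 c s y 0 o1 = c * y 0 o1 - s * y 0 o2 /\
  rotv o1 o2 c s y 0 o2 = s * y 0 o1 + c * y 0 o2.
Proof.
rewrite /rotv /Pv /Qv !mxE !eqxx ?e01 ?e02 ?e10 ?e12 ?e20 ?e21 /=.
move: (y 0 o0) (y 0 o1) (y 0 o2) => y0 y1 y2.
by split; [|split]; ring.
Qed.

Lemma rotv_lin a b c s (k : R) (u v : vec R) :
  rotv a b c s (k *: u + v) = k *: rotv a b c s u + rotv a b c s v.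
Proof. apply/rowP => j; rewrite /rotv /Pv /Qv !mxE; ring. Qed.

Lemma rotPS_curve a b c s (w : PS R) :
  rotPS a b c s w = (w - PPS a b w) + c *: PPS a b w + s *: Xg a b w.
Proof. by rewrite /rotPS /PPS /Xg /rotv /=; case: w => [[x p] sv]. Qed.

Lemma Xg_dec a b (w : PS R) : Xg a b w =
  (- xof w 0 b) *: ex a + xof w 0 a *: ex b + (- pof w 0 b) *: ep a
  + pof w 0 a *: ep b + (- sof w 0 b) *: es a + sof w 0 a *: es b.
Proof.
rewrite /Xg /Qv /ex /ep /es /=; case: w => [[x p] sv] /=.
congr (_, _, _); apply/rowP => j; rewrite !mxE /xof /pof /sof /=; ring.
Qed.

Lemma DX a b (f : PS R -> R) (w : PS R) : differentiable f w ->
  'D_(Xg a b w) f w =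
  - xof w 0 b * 'D_(ex a) f w + xof w 0 a * 'D_(ex b) f w
  - pof w 0 b * 'D_(ep a) f w + pof w 0 a * 'D_(ep b) f w
  - sof w 0 b * 'D_(es a) f w + sof w 0 a * 'D_(es b) f w.
Proof.
move=> df; rewrite Xg_dec !DdirD // !DdirZ //.
move: ('D_(ex a) f w) ('D_(ex b) f w) ('D_(ep a) f w) ('D_(ep b) f w)
  ('D_(es a) f w) ('D_(es b) f w) => d0 d1 d2 d3 d4 d5.
move: (xof w 0 a) (xof w 0 b) (pof w 0 a) (pof w 0 b) (sof w 0 a) (sof w 0 b).
move=> x0 x1 p0 p1 s0 s1; ring.
Qed.

Lemma pbJ_D a b (f : PS R -> R) (w : PS R) : plane a b -> differentiable f w ->
  pb (Jgen a b) f w = - 'D_(Xg a b w) f w.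
Proof.
move=> + df; rewrite DX //.
move/orP => [/andP[/eqP-> /eqP->] | /andP[/eqP-> /eqP->]];
  [rewrite pbJ01 | rewrite pbJ12];
move: ('D_(ex o0) f w) ('D_(ex o1) f w) ('D_(ex o2) f w) => d0 d1 d2;
move: ('D_(ep o0) f w) ('D_(ep o1) f w) ('D_(ep o2) f w) => d3 d4 d5;
move: ('D_(es o0) f w) ('D_(es o1) f w) ('D_(es o2) f w) => d6 d7 d8;
move: (xof w 0 o0) (xof w 0 o1) (xof w 0 o2) (pof w 0 o0) (pof w 0 o1) (pof w 0 o2)
  (sof w 0 o0) (sof w 0 o1) (sof w 0 o2) => x0 x1 x2 p0 p1 p2 s0 s1 s2; ring.
Qed.

Lemma Qv_rot a b c s (y : vec R) : plane a b ->
  Qv a b (rotv a b c s y) = (- s) *: Pv a b y + c *: Qv a b y.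
Proof.
move/orP => [/andP[/eqP-> /eqP->] | /andP[/eqP-> /eqP->]];
  [have [E0 [E1 E2]] := rot01E c s y | have [E0 [E1 E2]] := rot12E c s y];
apply/vec3P; rewrite /Qv /Pv !mxE ?E0 ?E1 ?E2 !eqxx ?e01 ?e02 ?e10 ?e12 ?e20 ?e21 /=;
move: (y 0 o0) (y 0 o1) (y 0 o2) => y0 y1 y2; ring.
Qed.

Lemma Xg_rot a b c s (w : PS R) : plane a b ->
  Xg a b (rotPS a b c s w) = (- s) *: PPS a b w + c *: Xg a b w.
Proof.
move=> pl; rewrite /Xg /rotPS /PPS /xof /pof /sof /= !Qv_rot //.
Qed.

Lemma cs_alg (c s x : R) : c ^+ 2 + s ^+ 2 = 1 -> (c ^+ 2 + s ^+ 2) * x = x.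
Proof. by move=> ->; rewrite mul1r. Qed.

Lemma cs_eq (c s K L M : R) : c ^+ 2 + s ^+ 2 = 1 ->
  L - M = (c ^+ 2 + s ^+ 2 - 1) * K -> L = M.
Proof. by move=> -> /eqP; rewrite subrr mul0r subr_eq0 => /eqP. Qed.

Lemma rotv_inv a b c s (y : vec R) : plane a b -> c ^+ 2 + s ^+ 2 = 1 ->
  rotv a b c (- s) (rotv a b c s y) = y.
Proof.
move=> + cs.
move/orP => [/andP[/eqP-> /eqP->] | /andP[/eqP-> /eqP->]].
- have [E0 [E1 E2]] := rot01E c s y.
  have [F0 [F1 F2]] := rot01E c (- s) (rotv o0 o1 c s y).
  apply/vec3P; rewrite ?F0 ?F1 ?F2 ?E0 ?E1 ?E2;
  move: (y 0 o0) (y 0 o1) (y 0 o2) => y0 y1 y2;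
  [apply: (eq_trans _ (cs_alg y0 cs)) | apply: (eq_trans _ (cs_alg y1 cs)) | by []]; ring.
- have [E0 [E1 E2]] := rot12E c s y.
  have [F0 [F1 F2]] := rot12E c (- s) (rotv o1 o2 c s y).
  apply/vec3P; rewrite ?F0 ?F1 ?F2 ?E0 ?E1 ?E2;
  move: (y 0 o0) (y 0 o1) (y 0 o2) => y0 y1 y2;
  [by [] | apply: (eq_trans _ (cs_alg y1 cs)) | apply: (eq_trans _ (cs_alg y2 cs))]; ring.
Qed.

Lemma dot_rot a b c s (u v : vec R) : plane a b -> c ^+ 2 + s ^+ 2 = 1 ->
  dot (rotv a b c s u) (rotv a b c s v) = dot u v.
Proof.
move=> + cs; rewrite !dotE.
move/orP => [/andP[/eqP-> /eqP->] | /andP[/eqP-> /eqP->]].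
- have [E0 [E1 E2]] := rot01E c s u; have [F0 [F1 F2]] := rot01E c s v.
  rewrite E0 E1 E2 F0 F1 F2.
  move: (u 0 o0) (u 0 o1) (u 0 o2) (v 0 o0) (v 0 o1) (v 0 o2) => a0 a1 a2 b0 b1 b2.
  apply: (@cs_eq c s (a0 * b0 + a1 * b1) _ _ cs); ring.
- have [E0 [E1 E2]] := rot12E c s u; have [F0 [F1 F2]] := rot12E c s v.
  rewrite E0 E1 E2 F0 F1 F2.
  move: (u 0 o0) (u 0 o1) (u 0 o2) (v 0 o0) (v 0 o1) (v 0 o2) => a0 a1 a2 b0 b1 b2.
  apply: (@cs_eq c s (a1 * b1 + a2 * b2) _ _ cs); ring.
Qed.

Lemma cross_rot a b c s (u v : vec R) : plane a b -> c ^+ 2 + s ^+ 2 = 1 ->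
  cross (rotv a b c s u) (rotv a b c s v) = rotv a b c s (cross u v).
Proof.
move=> + cs.
have [C0 [C1 C2]] := crossE (rotv a b c s u) (rotv a b c s v).
have [D0 [D1 D2]] := crossE u v.
move/orP => [/andP[/eqP ea /eqP eb] | /andP[/eqP ea /eqP eb]]; subst a b.
- have [E0 [E1 E2]] := rot01E c s u; have [F0 [F1 F2]] := rot01E c s v.
  have [G0 [G1 G2]] := rot01E c s (cross u v).
  apply/vec3P; rewrite ?C0 ?C1 ?C2 ?G0 ?G1 ?G2 ?D0 ?D1 ?D2 ?E0 ?E1 ?E2 ?F0 ?F1 ?F2;
  move: (u 0 o0) (u 0 o1) (u 0 o2) (v 0 o0) (v 0 o1) (v 0 o2) => a0 a1 a2 b0 b1 b2;
  [ring | ring | apply: (eq_trans _ (cs_alg (a0 * b1 - a1 * b0) cs)); ring].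
- have [E0 [E1 E2]] := rot12E c s u; have [F0 [F1 F2]] := rot12E c s v.
  have [G0 [G1 G2]] := rot12E c s (cross u v).
  apply/vec3P; rewrite ?C0 ?C1 ?C2 ?G0 ?G1 ?G2 ?D0 ?D1 ?D2 ?E0 ?E1 ?E2 ?F0 ?F1 ?F2;
  move: (u 0 o0) (u 0 o1) (u 0 o2) (v 0 o0) (v 0 o1) (v 0 o2) => a0 a1 a2 b0 b1 b2;
  [apply: (eq_trans _ (cs_alg (a1 * b2 - a2 * b1) cs)); ring | ring | ring].
Qed.
End H2.


Section H3.
Variable R : realType.
Notation o0 := (@Ordinal 3 0 isT).
Notation o1 := (@Ordinal 3 1 isT).
Notation o2 := (@Ordinal 3 2 isT).

Lemma rotv_id a b (y : vec R) : rotv a b 1 0 y = y.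
Proof. by rewrite /rotv scale1r scale0r addr0 subrK. Qed.
Lemma rotPS_id a b (z : PS R) : rotPS a b 1 0 z = z.
Proof. by rewrite /rotPS !rotv_id; case: z => [[]]. Qed.

Lemma enorm_rot a b c s (u : vec R) : plane a b -> c ^+ 2 + s ^+ 2 = 1 ->
  enorm (rotv a b c s u) = enorm u.
Proof. by move=> pl cs; rewrite /enorm dot_rot. Qed.

Lemma Gamma_rot (S : R) a b c s (z : PS R) : plane a b -> c ^+ 2 + s ^+ 2 = 1 ->
  Gamma S z -> Gamma S (rotPS a b c s z).
Proof. by move=> pl cs; rewrite /Gamma /= /sof /= enorm_rot. Qed.

Lemma diff_coord (A : PS R -> vec R) (z : PS R) k :
  differentiable A z -> differentiable (fun w => A w 0 k) z.
Proof.
move=> dA; exact: (differentiable_comp dA (differentiable_coord _ _ _)).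
Qed.

Lemma cs_th (t : R) : cos t ^+ 2 + sin t ^+ 2 = 1.
Proof. exact: cos2Dsin2. Qed.

Lemma equivar (S : R) (A : PS R -> vec R) a b :
  plane a b ->
  (forall z, Gamma S z -> differentiable A z) ->
  (forall k z, Gamma S z ->
     pb (Jgen a b) (fun w => A w 0 k) z = kdelta a k * A z 0 b - kdelta b k * A z 0 a) ->
  forall z t, Gamma S z ->
    A (rotPS a b (cos t) (sin t) z) = rotv a b (cos t) (sin t) (A z).
Proof.
move=> pl dA HJ z t Gz.
pose h : 'I_3 -> R -> R := fun k r => A (rotPS a b (cos r) (sin r) z) 0 k.
have G t' : Gamma S (rotPS a b (cos t') (sin t') z) by apply: Gamma_rot => //; exact: cs_th.
have hder (k : 'I_3) (t' : R) : is_derive t' (1:R) (h k)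
    (- (kdelta a k * h b t' - kdelta b k * h a t')).
  have E : h k = (fun t => (fun w => A w 0 k)
      (z - PPS a b z + cos t *: PPS a b z + sin t *: Xg a b z)).
    by apply/funext => r; rewrite /h rotPS_curve.
  have dd : differentiable (fun w => A w 0 k)
      (z - PPS a b z + cos t' *: PPS a b z + sin t' *: Xg a b z).
    rewrite -rotPS_curve; exact: diff_coord (dA _ (G t')).
  have D := chain (is_derive_cos t') (is_derive_sin t') dd.
  rewrite E; apply: (is_derive_eq D).
  rewrite -rotPS_curve -Xg_rot //.
  have P := pbJ_D pl (diff_coord k (dA _ (G t'))).
  by rewrite HJ // in P; rewrite -[LHS]opprK -P.
have ab : a != b by case/orP: pl => /andP[/eqP-> /eqP->].
have kaa : kdelta a a = 1 :> R by rewrite /kdelta eqxx.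
have kbb : kdelta b b = 1 :> R by rewrite /kdelta eqxx.
have kab : kdelta a b = 0 :> R by rewrite /kdelta (negbTE ab).
have kba : kdelta b a = 0 :> R by rewrite /kdelta eq_sym (negbTE ab).
have U0 r : is_derive r (1:R) (h a * cos + h b * sin) 0.
  apply: (is_derive_eq (is_deriveD (is_deriveM (hder a r) (is_derive_cos r))
                                 (is_deriveM (hder b r) (is_derive_sin r)))).
  rewrite kaa kbb kab kba !scaleRE.
  move: (h a r) (h b r) (cos r) (sin r) => x y c s; ring.
have V0 r : is_derive r (1:R) (h b * cos - h a * sin) 0.
  apply: (is_derive_eq (is_deriveB (is_deriveM (hder b r) (is_derive_cos r))
                                 (is_deriveM (hder a r) (is_derive_sin r)))).
  rewrite kaa kbb kab kba !scaleRE.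
  move: (h a r) (h b r) (cos r) (sin r) => x y c s; ring.
have Ut : h a t * cos t + h b t * sin t = h a 0 * cos 0 + h b 0 * sin 0.
  exact: (is_derive_0_is_cst (f := h a * cos + h b * sin) t 0 U0).
have Vt : h b t * cos t - h a t * sin t = h b 0 * cos 0 - h a 0 * sin 0.
  exact: (is_derive_0_is_cst (f := h b * cos - h a * sin) t 0 V0).
rewrite cos0 sin0 !mulr1 !mulr0 addr0 subr0 in Ut Vt.
have Kt k : k != a -> k != b -> h k t = h k 0.
  move=> ka kb; apply: is_derive_0_is_cst => r.
  apply: (is_derive_eq (hder k r)).
  by rewrite /kdelta eq_sym (negbTE ka) eq_sym (negbTE kb) !mul0r subrr oppr0.
have cs := cs_th t.
have Ha : h a t = cos t * h a 0 - sin t * h b 0.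
  rewrite -Ut -Vt; move: Ut Vt => _ _.
  move: (h a t) (h b t) (cos t) (sin t) cs => x y c s cs.
  by apply: (@cs_eq _ c s (- x) _ _ cs); ring.
have Hb : h b t = sin t * h a 0 + cos t * h b 0.
  rewrite -Ut -Vt; move: Ut Vt => _ _.
  move: (h a t) (h b t) (cos t) (sin t) cs => x y c s cs.
  by apply: (@cs_eq _ c s (- y) _ _ cs); ring.
have hz k : A z 0 k = h k 0 by rewrite /h cos0 sin0 rotPS_id.
move: Ha Hb Kt hz; rewrite /h.
case/orP: pl => /andP[/eqP ea /eqP eb]; subst a b => Ha Hb Kt hz.
- have [E0 [E1 E2]] := rot01E (cos t) (sin t) (A z).
  apply/vec3P; rewrite ?E0 ?E1 ?E2 !hz ?Ha ?Hb //; exact: Kt.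
- have [E0 [E1 E2]] := rot12E (cos t) (sin t) (A z).
  apply/vec3P; rewrite ?E0 ?E1 ?E2 !hz ?Ha ?Hb //; exact: Kt.
Qed.

Lemma pairP3 (u v : PS R) : u.1.1 = v.1.1 -> u.1.2 = v.1.2 -> u.2 = v.2 -> u = v.
Proof. by case: u => [[? ?] ?]; case: v => [[? ?] ?] /= -> -> ->. Qed.

Lemma transl (S : R) (A : PS R -> vec R) :
  (forall z, Gamma S z -> differentiable A z) ->
  (forall a k z, Gamma S z -> pb (Pgen a) (fun w => A w 0 k) z = 0) ->
  forall z, Gamma S z -> A z = A (0, pof z, sof z).
Proof.
move=> dA HP z Gz.
pose W : PS R := (0, pof z, sof z).
pose U : PS R := (xof z, 0, 0).
have gam r : W + r *: U + 0 *: (0 : PS R) = (r *: xof z, pof z, sof z).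
  apply: pairP3; rewrite /= ?scale0r ?scaler0 ?addr0 ?add0r //. Show.
have G r : Gamma S (W + r *: U + 0 *: (0 : PS R)) by rewrite gam.
have Udec : U = xof z 0 o0 *: ex o0 + xof z 0 o1 *: ex o1 + xof z 0 o2 *: ex o2.
  apply: pairP3 => /=; apply/vec3P; rewrite !mxE ?eqxx ?e01 ?e02 ?e10 ?e12 ?e20 ?e21 /=;
  move: (xof z 0 o0) (xof z 0 o1) (xof z 0 o2) => x0 x1 x2; ring.
apply/rowP => k.
pose h r := A (W + r *: U + 0 *: (0 : PS R)) 0 k.
have hd r : is_derive r (1:R) h 0.
  have dd : differentiable (fun w => A w 0 k) (W + id r *: U + cst 0 r *: (0 : PS R)).
    exact: diff_coord (dA _ (G r)).
  have D := chain (is_derive_id r 1) (is_derive_cst 0 r 1) dd.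
  apply: (is_derive_eq D).
  have dk := diff_coord k (dA _ (G r)).
  have -> : W + id r *: U + cst 0 r *: (0 : PS R) = W + r *: U + 0 *: (0 : PS R) by [].
  set w0 := (W + r *: U + 0 *: (0 : PS R)) in dk *.
  rewrite scale1r scale0r addr0 Udec !DdirD // !DdirZ //.
  have Z i : 'D_(ex i) (fun w => A w 0 k) (W + r *: U + 0 *: (0 : PS R)) = 0.
    by apply/eqP; rewrite -oppr_eq0 -pbP HP.
  by rewrite !Z !mulr0 !addr0.
have := is_derive_0_is_cst (f := h) 1 0 hd.
rewrite /h !gam scale1r => E.
have zE : z = (xof z, pof z, sof z) by case: z {W U gam G Udec h hd E Gz} => [[]].
by rewrite {1}zE E scale0r.
Qed.
End H3.


Section H4.
Variable R : realType.
Notation o0 := (@Ordinal 3 0 isT).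
Notation o1 := (@Ordinal 3 1 isT).
Notation o2 := (@Ordinal 3 2 isT).

Lemma angle (c s : R) : c ^+ 2 + s ^+ 2 = 1 -> exists t, cos t = c /\ sin t = s.
Proof.
move=> cs.
have c1 : -1 <= c <= 1.
  have : c ^+ 2 <= 1 by rewrite -cs lerDl sqr_ge0.
  by rewrite -ler_sqrt ?ltr01 // sqrtr_sqr sqrtr1 ler_norml.
have ss : Num.sqrt (1 - c ^+ 2) = `|s| by rewrite -cs addrAC subrr add0r sqrtr_sqr.
have [s0|s0] := leP 0 s.
- exists (acos c); split; first by rewrite acosK // in_itv.
  by rewrite sin_acos // ss ger0_norm.
- exists (- acos c); split; first by rewrite cosN acosK // in_itv.
  by rewrite sinN sin_acos // ss ltr0_norm // opprK.
Qed.

Lemma rot_to (u v : R) : exists t,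
  cos t * u - sin t * v = 0 /\ sin t * u + cos t * v = Num.sqrt (u ^+ 2 + v ^+ 2).
Proof.
set r := Num.sqrt (u ^+ 2 + v ^+ 2).
have r0 : 0 <= u ^+ 2 + v ^+ 2 by rewrite addr_ge0 // sqr_ge0.
have [rz|rnz] := eqVneq r 0.
  have : u ^+ 2 + v ^+ 2 = 0.
    by apply/eqP; rewrite eq_le r0 andbT -sqrtr_eq0 -/r rz.
  move/eqP; rewrite paddr_eq0 ?sqr_ge0 // !sqrf_eq0 => /andP[/eqP-> /eqP->].
  by exists 0; rewrite rz !mulr0 subr0 addr0.
have rr : r ^+ 2 = u ^+ 2 + v ^+ 2 by rewrite sqr_sqrtr.
have [t [ct st]] : exists t, cos t = v / r /\ sin t = u / r.
  apply: angle; rewrite !expr_div_n -mulrDl addrC -rr mulfV //.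
  by rewrite expf_neq0.
exists t; rewrite ct st; split.
  rewrite mulrAC [u / r * v]mulrAC; ring.
have -> : u / r * u + v / r * v = (u ^+ 2 + v ^+ 2) / r by ring.
by rewrite -rr mulrC -[r ^+ 2]/(r * r) mulKf.
Qed.

Lemma rot_to2 (u v : R) : 0 < u ^+ 2 + v ^+ 2 -> exists t,
  cos t * u - sin t * v = Num.sqrt (u ^+ 2 + v ^+ 2) /\ sin t * u + cos t * v = 0.
Proof.
move=> r0; set r := Num.sqrt (u ^+ 2 + v ^+ 2).
have rnz : r != 0 by rewrite /r sqrtr_eq0 -ltNge.
have rr : r ^+ 2 = u ^+ 2 + v ^+ 2 by rewrite sqr_sqrtr // ltW.
have [t [ct st]] : exists t, cos t = u / r /\ sin t = - v / r.
  apply: angle; rewrite !expr_div_n sqrrN -mulrDl -rr mulfV //.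
  by rewrite expf_neq0.
exists t; rewrite ct st; split; last first.
  rewrite mulrAC [u / r * v]mulrAC; ring.
have -> : u / r * u - - v / r * v = (u ^+ 2 + v ^+ 2) / r by ring.
by rewrite -rr mulrC -[r ^+ 2]/(r * r) mulKf.
Qed.

Definition inv (w : PS R) : R * R := (enorm (pof w), dot (phat w) (sof w)).
Definition Pform (B C : R * R -> R) (A : PS R -> vec R) (w : PS R) :=
  A w = B (inv w) *: cross (phat w) (sof w)
        + C (inv w) *: cross (phat w) (cross (phat w) (sof w)).

Lemma rotv0 a b c s : rotv a b c s (0 : vec R) = 0.
Proof. by apply/rowP => j; rewrite /rotv /Pv /Qv !mxE; ring. Qed.
Lemma rotvZ a b c s k (u : vec R) : rotv a b c s (k *: u) = k *: rotv a b c s u.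
Proof. by have := rotv_lin a b c s k u 0; rewrite !addr0 rotv0 addr0. Qed.

Lemma phat_rot a b c s (w : PS R) : plane a b -> c ^+ 2 + s ^+ 2 = 1 ->
  phat (rotPS a b c s w) = rotv a b c s (phat w).
Proof.
by move=> pl cs; rewrite /phat rotvZ; congr (_ *: _); rewrite /pof /= enorm_rot.
Qed.

Lemma inv_rot a b c s (w : PS R) : plane a b -> c ^+ 2 + s ^+ 2 = 1 ->
  inv (rotPS a b c s w) = inv w.
Proof.
move=> pl cs; rewrite /inv phat_rot //; congr (_, _).
  by rewrite /pof /= enorm_rot.
by rewrite /sof /= dot_rot.
Qed.

Lemma P_rot B C A a b c s (w : PS R) : plane a b -> c ^+ 2 + s ^+ 2 = 1 ->
  A (rotPS a b c s w) = rotv a b c s (A w) ->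
  Pform B C A (rotPS a b c s w) -> Pform B C A w.
Proof.
move=> pl cs HA; rewrite /Pform inv_rot // phat_rot // HA.
have -> : sof (rotPS a b c s w) = rotv a b c s (sof w) by [].
rewrite !cross_rot // -(rotvZ _ _ _ _ (C (inv w))) -rotv_lin => E.
by rewrite -(rotv_inv (A w) pl cs) E rotv_inv.
Qed.

Definition sig (S t : R) := Num.sqrt (S ^+ 2 - t ^+ 2).
Definition zc (S : R) (q : R * R) : PS R :=
  (0, q.1 *: delta_mx 0 o2, sig S q.2 *: delta_mx 0 o0 + q.2 *: delta_mx 0 o2).
Definition Bf (S : R) (A : PS R -> vec R) (q : R * R) := A (zc S q) 0 o1 / sig S q.2.
Definition Cf (S : R) (A : PS R -> vec R) (q : R * R) := - A (zc S q) 0 o0 / sig S q.2.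

Lemma sig_gt0 (S t : R) : - S < t < S -> 0 < sig S t.
Proof.
move=> /andP[h1 h2]; rewrite /sig sqrtr_gt0 subr_gt0.
have S0 : 0 < S by have := lt_trans h1 h2; lra.
rewrite -ltr_sqrt ?exprn_gt0 // !sqrtr_sqr (gtr0_norm S0) ltr_norml h1 h2 //.
Qed.

Lemma d2 (i : 'I_3) : (delta_mx 0 o2 : vec R) 0 i = (i == o2)%:R.
Proof. by rewrite mxE. Qed.
Lemma d0 (i : 'I_3) : (delta_mx 0 o0 : vec R) 0 i = (i == o0)%:R.
Proof. by rewrite mxE. Qed.

Lemma inv_zc (S : R) (q : R * R) : 0 < q.1 ->
  inv (zc S q) = q /\ phat (zc S q) = delta_mx 0 o2.
Proof.
move=> r0.
have en : enorm (pof (zc S q)) = q.1.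
  rewrite /enorm dotE /pof /= !mxE !eqxx ?e01 ?e02 ?e10 ?e12 ?e20 ?e21 /=.
  rewrite !mulr0 !add0r mulr1 -expr2 sqrtr_sqr gtr0_norm //.
have ph : phat (zc S q) = delta_mx 0 o2.
  by rewrite /phat en /pof /= scalerA mulVf ?gt_eqF // scale1r.
split => //; rewrite /inv en ph dotE /sof /= !mxE !eqxx ?e01 ?e02 ?e10 ?e12 ?e20 ?e21 /=.
by case: q r0 {en ph} => r t /= _; congr (_, _); ring.
Qed.

Lemma P_canon (S : R) (A : PS R -> vec R) (q : R * R) :
  0 < q.1 -> - S < q.2 < S -> dot (A (zc S q)) (pof (zc S q)) = 0 ->
  Pform (Bf S A) (Cf S A) A (zc S q).
Proof.
move=> r0 tS hd; have [iv ph] := inv_zc S r0.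
have sg := sig_gt0 tS.
rewrite /Pform iv ph.
have HX : cross (delta_mx 0 o2) (sof (zc S q)) = (sig S q.2) *: delta_mx 0 o1.
  have [C0 [C1 C2]] := crossE (delta_mx 0 o2) (sof (zc S q)).
  apply/vec3P; rewrite ?C0 ?C1 ?C2 /sof /= !mxE
    !eqxx ?e01 ?e02 ?e10 ?e12 ?e20 ?e21 /=; ring.
have HY : cross (delta_mx 0 o2) ((sig S q.2) *: delta_mx 0 o1) = (- (sig S q.2)) *: delta_mx 0 o0.
  have [C0 [C1 C2]] := crossE (delta_mx 0 o2) ((sig S q.2) *: delta_mx 0 o1).
  apply/vec3P; rewrite ?C0 ?C1 ?C2 /sof /= !mxE
    !eqxx ?e01 ?e02 ?e10 ?e12 ?e20 ?e21 /=; ring.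
rewrite HX HY.
move: hd; rewrite dotE /pof /= !mxE !eqxx ?e01 ?e02 ?e10 ?e12 ?e20 ?e21 /=.
rewrite !mulr0 !add0r mulr1 => /eqP; rewrite mulf_eq0 (gt_eqF r0) orbF => /eqP A2.
have sn : (sig S q.2) != 0 by rewrite gt_eqF.
apply/vec3P; rewrite !mxE !eqxx ?e01 ?e02 ?e10 ?e12 ?e20 ?e21 /= /Bf /Cf  ?A2.
all: move: (A (zc S q) 0 o0) (A (zc S q) 0 o1) sn => x y sn'; field => //.
Qed.

Lemma par_rot a b c s (w : PS R) : plane a b -> c ^+ 2 + s ^+ 2 = 1 ->
  s_parallel_Phat (rotPS a b c s w) -> s_parallel_Phat w.
Proof.
move=> pl cs [k Hk]; exists k.
have E : rotv a b c s (sof w) = rotv a b c s (k *: phat w).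
  by rewrite rotvZ -phat_rot //.
by rewrite -(rotv_inv (sof w) pl cs) E rotv_inv.
Qed.

Lemma tR : true%:R = 1 :> R. Proof. by []. Qed.
Lemma fR : false%:R = 0 :> R. Proof. by []. Qed.

Lemma vcomb (x y : R) i j k :
  (x *: delta_mx 0 i + y *: delta_mx 0 j : vec R) 0 k = x * (k == i)%:R + y * (k == j)%:R.
Proof. by rewrite !mxE. Qed.
Lemma vsc (x : R) i k : (x *: delta_mx 0 i : vec R) 0 k = x * (k == i)%:R.
Proof. by rewrite !mxE. Qed.

Lemma pl01 : plane o0 o1. Proof. by []. Qed.
Lemma pl12 : plane o1 o2. Proof. by []. Qed.

Lemma reduce (S : R) (A : PS R -> vec R) (B C : R * R -> R) :
  (forall z, Gamma S z -> differentiable A z) ->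
  (forall a k z, Gamma S z -> pb (Pgen a) (fun w => A w 0 k) z = 0) ->
  (forall a b k z, Gamma S z ->
     pb (Jgen a b) (fun w => A w 0 k) z = kdelta a k * A z 0 b - kdelta b k * A z 0 a) ->
  (forall q, 0 < q.1 -> - S < q.2 < S -> Pform B C A (zc S q)) ->
  forall z, Gamma_good S z -> Pform B C A z.
Proof.
move=> dA HP HJ Hc z [Gz [pn npar]].
pose z0 : PS R := (0, pof z, sof z).
have G0 : Gamma S z0 by [].
suff P0 : Pform B C A z0 by rewrite /Pform (transl dA HP Gz).
have EQ a b : plane a b -> forall w t, Gamma S w ->
    A (rotPS a b (cos t) (sin t) w) = rotv a b (cos t) (sin t) (A w).
  by move=> pl w t Gw; apply: (equivar pl dA) => // k w' Gw'; apply: HJ.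
have [t1 [h11 h12]] := rot_to (pof z 0 o0) (pof z 0 o1).
pose w1 := rotPS o0 o1 (cos t1) (sin t1) z0.
have G1 : Gamma S w1 by apply: Gamma_rot => //; exact: cs_th.
set rho := Num.sqrt _ in h12.
have [t2 [h21 h22]] := rot_to rho (pof z 0 o2).
pose w2 := rotPS o1 o2 (cos t2) (sin t2) w1.
have G2 : Gamma S w2 by apply: Gamma_rot => //; exact: cs_th.
set r := Num.sqrt _ in h22.
have pw2 : pof w2 = r *: delta_mx 0 o2.
  have [E0 [E1 E2]] := rot12E (cos t2) (sin t2) (pof w1).
  have [F0 [F1 F2]] := rot01E (cos t1) (sin t1) (pof z0).
  apply/vec3P; rewrite /w2 /= ?E0 ?E1 ?E2 /w1 /= ?F0 ?F1 ?F2 !mxE /= ?h11 ?h12 ?h21 ?h22;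
    by rewrite ?mulr0 ?mulr1.
have r0 : 0 < r.
  have : enorm (pof w2) = enorm (pof z).
    by rewrite /w2 /w1 /pof /= !enorm_rot //; exact: cs_th.
  rewrite pw2 /enorm dotE !mxE /= !mulr0 !mulr1 !add0r -expr2 sqrtr_sqr => E.
  have rge : 0 <= r by apply: sqrtr_ge0.
  by rewrite lt_neqAle rge andbT eq_sym -normr_eq0 E.
have ph2 : phat w2 = delta_mx 0 o2.
  rewrite /phat pw2 /enorm dotE !mxE /= !mulr0 !mulr1 !add0r -expr2 sqrtr_sqr.
  by rewrite gtr0_norm // scalerA mulVf ?gt_eqF // scale1r.
have upos : 0 < sof w2 0 o0 ^+ 2 + sof w2 0 o1 ^+ 2.
  rewrite lt_neqAle addr_ge0 ?sqr_ge0 // andbT; apply/negP => /eqP H.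
  move: H; move/esym/eqP; rewrite paddr_eq0 ?sqr_ge0 // !sqrf_eq0 => /andP[/eqP u0 /eqP u1].
  apply: npar.
  suff : s_parallel_Phat w2.
    by move/par_rot => /(_ pl12 (cs_th t2)) /par_rot => /(_ pl01 (cs_th t1)).
    exists (sof w2 0 o2); rewrite ph2; apply/vec3P; rewrite [RHS]mxE d2 ?e02 ?e12 ?eqxx ?u0 ?u1;
    by rewrite ?mulr0 ?mulr1.
have [t3 [h31 h32]] := rot_to2 upos.
pose w3 := rotPS o0 o1 (cos t3) (sin t3) w2.
have G3 : Gamma S w3 by apply: Gamma_rot => //; exact: cs_th.
set mu := Num.sqrt _ in h31.
have mu0 : 0 < mu by rewrite /mu sqrtr_gt0.
have sw3 : sof w3 = mu *: delta_mx 0 o0 + sof w2 0 o2 *: delta_mx 0 o2.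
  have [E0 [E1 E2]] := rot01E (cos t3) (sin t3) (sof w2).
  apply/vec3P; rewrite /w3 /sof /= -/(sof w2) ?E0 ?E1 ?E2 vcomb ?h31 ?h32 ?eqxx ?e01 ?e02 ?e10 ?e12 ?e20 ?e21;
    by rewrite ?mulr0 ?mulr1 ?addr0 ?add0r.
have pw3 : pof w3 = r *: delta_mx 0 o2.
  have [E0 [E1 E2]] := rot01E (cos t3) (sin t3) (pof w2).
  apply/vec3P; rewrite /w3 /pof /= -/(pof w2) ?E0 ?E1 ?E2 pw2 !vsc ?eqxx ?e01 ?e02 ?e10 ?e12 ?e20 ?e21;
    by rewrite ?mulr0 ?mulr1 ?subr0 ?addr0.
have xw3 : xof w3 = 0 by rewrite /w3 /w2 /w1 /z0 /rotPS /xof /= !rotv0.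
set u2 := sof w2 0 o2 in sw3.
have SS : S ^+ 2 = mu ^+ 2 + u2 ^+ 2.
  have G3' : enorm (sof w3) = S := G3.
  move: G3'; rewrite /enorm sw3 dotE !vcomb ?eqxx ?e01 ?e02 ?e10 ?e12 ?e20 ?e21 => <-.
  rewrite tR fR !mulr1 !mulr0 !addr0 !add0r -!expr2 sqr_sqrtr expr0n /= addr0 //.
  by rewrite addr_ge0 ?sqr_ge0.
have S0 : 0 <= S.
  have G3' : enorm (sof w3) = S := G3.
  by rewrite -G3'; apply: sqrtr_ge0.
have sgu : sig S u2 = mu by rewrite /sig SS addrK sqrtr_sqr gtr0_norm.
have uS : - S < u2 < S.
  have m2 : 0 < mu ^+ 2 := exprn_gt0 2 mu0.
  have u2p : 0 <= u2 ^+ 2 := sqr_ge0 u2.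
  rewrite -ltr_norml -(ger0_norm S0) -!sqrtr_sqr ltr_sqrt SS; lra.
have w3E : w3 = zc S (r, u2).
  apply: pairP3.
  - exact: xw3.
  - exact: pw3.
  - change (sof w3 = sig S u2 *: delta_mx 0 o0 + u2 *: delta_mx 0 o2).
    by rewrite sgu sw3.
have P3 : Pform B C A w3 by rewrite w3E; apply: Hc.
have P2 : Pform B C A w2.
  by apply: (P_rot pl01 (cs_th t3) _ P3); apply: EQ.
have P1 : Pform B C A w1.
  by apply: (P_rot pl12 (cs_th t2) _ P2); apply: EQ.
by apply: (P_rot pl01 (cs_th t1) _ P1); apply: EQ.
Qed.
End H4.

Section H5.
Variable R : realType.
Notation o0 := (@Ordinal 3 0 isT).
Notation o1 := (@Ordinal 3 1 isT).
Notation o2 := (@Ordinal 3 2 isT).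

Lemma Dex (V W : normedModType R) (f : V -> W) a v df :
  is_derive a v f df -> derivable f a v.
Proof. by move=> H; apply: ex_derive. Qed.

Lemma diff_fst (q : R * R) : differentiable (fst : R * R -> R) q.
Proof.
have lin : linear (fst : R * R -> R) by [].
pose M := GRing.isLinear.Build _ _ _ _ _ lin.
pose L : {linear (R * R)%type -> R} := HB.pack (fst : R * R -> R) M.
have -> : (fst : R * R -> R) = L by [].
by apply: linear_differentiable => x; exact: cvg_fst.
Qed.
Lemma diff_snd (q : R * R) : differentiable (snd : R * R -> R) q.
Proof.
have lin : linear (snd : R * R -> R) by [].
pose M := GRing.isLinear.Build _ _ _ _ _ lin.
pose L : {linear (R * R)%type -> R} := HB.pack (snd : R * R -> R) M.
have -> : (snd : R * R -> R) = L by [].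
by apply: linear_differentiable => x; exact: cvg_snd.
Qed.
Lemma D_fst (q v : R * R) : 'D_v (fst : R * R -> R) q = v.1.
Proof. by apply: Dv; apply: is_derive_lin. Qed.
Lemma D_snd (q v : R * R) : 'D_v (snd : R * R -> R) q = v.2.
Proof. by apply: Dv; apply: is_derive_lin. Qed.

Lemma chainD (U V W : normedModType R) (g : U -> V) (f : V -> W) x v :
  differentiable g x -> differentiable f (g x) ->
  'D_v (f \o g) x = 'D_('D_v g x) f (g x).
Proof.
move=> dg df; rewrite deriveE; last exact: differentiable_comp.
by rewrite diff_comp // /= -deriveE // -deriveE.
Qed.

Lemma DR1 (f : R -> R) y (r : R) : differentiable f y -> 'D_r f y = r * 'D_1 f y.
Proof.
move=> df; rewrite !deriveE //.
by rewrite -{1}[r]mulr1 -[r * 1]/(r *: (1 : R)) linearZ.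
Qed.

Lemma DZl (V W : normedModType R) (k : V -> R) (E : W) x v :
  differentiable k x -> 'D_v (fun z => k z *: E) x = 'D_v k x *: E.
Proof.
move=> dk; rewrite deriveE; last exact: differentiableZl.
by rewrite diffZl // -deriveE.
Qed.

Lemma sig_derive (S t : R) : - S < t < S ->
  is_derive t (1:R) (sig S) (- t / sig S t).
Proof.
move=> tS; have sg := sig_gt0 tS.
have pos : 0 < S ^+ 2 - t ^+ 2 by rewrite -sqrtr_gt0.
have D1 : is_derive t (1:R) (fun t => S ^+ 2 - t ^+ 2) (- (2 * t)).
  apply: (is_derive_eq (is_deriveB (is_derive_cst (S ^+ 2) t 1)
             (is_deriveX 2 (is_derive_id t 1)))).
  by rewrite expr1 /= scaleRE mulr1 sub0r.
have C := @is_derive1_comp _ Num.sqrt (fun t => S ^+ 2 - t ^+ 2) t _ _ (is_derive1_sqrt pos) D1.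
have -> : - t / sig S t = (2 * sig S t)^-1 * - (2 * t).
  by move: sg; move: (sig S t) => s s0; field; rewrite gt_eqF.
exact: C.
Qed.

Lemma dsig (S t : R) : - S < t < S -> differentiable (sig S) t.
Proof. by move=> tS; apply/derivable1_diffP; exact: Dex (sig_derive tS). Qed.

Lemma isig_derive (S t : R) : - S < t < S ->
  is_derive t (1:R) (fun y => (sig S y)^-1) (t / sig S t ^+ 3).
Proof.
move=> tS; have sg := sig_gt0 tS; have D := sig_derive tS.
have sn : sig S t != 0 by rewrite gt_eqF.
apply: DeriveDef; first exact: (derivableV sn (Dex D)).
rewrite (deriveV sn (Dex D)).
rewrite (Dv D) scaleRE; move: sn; move: (sig S t) => s sn.
by field.
Qed.

Lemma zcE (S : R) : zc S = fun q => q.1 *: ep o2 + sig S q.2 *: es o0 + q.2 *: es o2.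
Proof.
apply/funext => q; apply: pairP3 => /=; apply/rowP => j; rewrite !mxE; ring.
Qed.

Lemma dsig2 (S : R) (q : R * R) : - S < q.2 < S ->
  differentiable (fun q : R * R => sig S q.2) q.
Proof.
move=> tS; have -> : (fun q : R * R => sig S q.2) = sig S \o snd by [].
by apply: differentiable_comp; [exact: diff_snd | exact: dsig].
Qed.

Lemma dzc (S : R) (q : R * R) : - S < q.2 < S -> differentiable (zc S) q.
Proof.
move=> tS; rewrite zcE.
apply: differentiableD; first apply: differentiableD.
- by apply: differentiableZl; exact: diff_fst.
- by apply: differentiableZl; exact: dsig2.
- by apply: differentiableZl; exact: diff_snd.
Qed.

Lemma D_zc (S : R) (q v : R * R) : - S < q.2 < S ->
  'D_v (zc S) q = v.1 *: ep o2 + (v.2 * (- q.2 / sig S q.2)) *: es o0 + v.2 *: es o2.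
Proof.
move=> tS; rewrite zcE.
have d1 : differentiable (fun q : R * R => q.1 *: (ep o2 : PS R)) q.
  by apply: differentiableZl; exact: diff_fst.
have d2 : differentiable (fun q : R * R => sig S q.2 *: (es o0 : PS R)) q.
  by apply: differentiableZl; exact: dsig2.
have d3 : differentiable (fun q : R * R => q.2 *: (es o2 : PS R)) q.
  by apply: differentiableZl; exact: diff_snd.
rewrite deriveD; last 2 first.
- by apply: diff_derivable; apply: differentiableD.
- exact: diff_derivable.
rewrite deriveD; [|exact: diff_derivable|exact: diff_derivable].
rewrite !DZl; [|exact: diff_snd|exact: dsig2|exact: diff_fst].
rewrite D_fst D_snd.
have -> : (fun q : R * R => sig S q.2) = sig S \o snd by [].
rewrite chainD; [|exact: diff_snd|exact: dsig].
by rewrite D_snd DR1 ?(Dv (sig_derive tS)) //; exact: dsig.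
Qed.
End H5.


Section H6.
Variable R : realType.
Notation o0 := (@Ordinal 3 0 isT).
Notation o1 := (@Ordinal 3 1 isT).
Notation o2 := (@Ordinal 3 2 isT).

Lemma Gamma_zc (S : R) (q : R * R) : 0 < S -> - S < q.2 < S -> Gamma S (zc S q).
Proof.
move=> S0 tS; have sg := sig_gt0 tS.
rewrite /Gamma /= /enorm dotE /sof /= !vcomb !eqxx ?e01 ?e02 ?e10 ?e12 ?e20 ?e21 tR fR.
rewrite !mulr0 !mulr1 !addr0 !add0r -!expr2 /sig sqr_sqrtr; last first.
  by move: sg; rewrite /sig sqrtr_gt0 => /ltW.
by rewrite [0 ^+ 2]expr2 mulr0 addr0 subrK sqrtr_sqr gtr0_norm.
Qed.

Lemma DAk (A : PS R -> vec R) (y e : PS R) k : differentiable A y ->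
  'D_e (fun w => A w 0 k) y = ('D_e A y) 0 k.
Proof.
move=> dA.
pose cf := fun N : 'M[R]_(1,3) => N 0 k.
have @f : {linear 'M[R]_(1, 3) -> R}.
  by exists cf; do 2![eexists]; do ?[constructor];
     rewrite /cf ?mxE// => ? *; rewrite ?mxE//; move=> ?; rewrite !mxE.
have fE : cf = f by [].
have dc : differentiable cf (A y) by rewrite fE; apply/linear_differentiable/coord_continuous.
change (fun w => A w 0 k) with (cf \o A).
rewrite deriveE; last exact: differentiable_comp.
rewrite diff_comp // /= [in RHS]deriveE // fE diff_lin //; exact: coord_continuous.
Qed.

Lemma DG (S : R) (A : PS R -> vec R) k (w v : R * R) :
  - S < w.2 < S -> differentiable A (zc S w) ->
  'D_v (fun q => A (zc S q) 0 k / sig S q.2) w =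
    A (zc S w) 0 k * (v.2 * (w.2 / sig S w.2 ^+ 3))
    + (sig S w.2)^-1 * (v.1 * ('D_(ep o2) A (zc S w)) 0 k
        + v.2 * (- w.2 / sig S w.2) * ('D_(es o0) A (zc S w)) 0 k
        + v.2 * ('D_(es o2) A (zc S w)) 0 k).
Proof.
move=> tS dA.
have dAk := diff_coord k dA.
have dF : differentiable (fun q => A (zc S q) 0 k) w.
  exact: (differentiable_comp (dzc tS) dAk).
have sn : sig S w.2 != 0 by rewrite gt_eqF // sig_gt0.
have dh1 : differentiable (fun y => (sig S y)^-1) w.2.
  by apply/derivable1_diffP; exact: Dex (isig_derive tS).
have dH : differentiable (fun q : R * R => (sig S q.2)^-1) w.
  exact: (differentiable_comp (diff_snd w) dh1).
have E : (fun q => A (zc S q) 0 k / sig S q.2) =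
    (fun q => A (zc S q) 0 k) * (fun q : R * R => (sig S q.2)^-1).
  by apply/funext => q.
rewrite E.
rewrite deriveM; [|exact: diff_derivable|exact: diff_derivable].
have -> : (fun q : R * R => (sig S q.2)^-1) = (fun y => (sig S y)^-1) \o snd by [].
rewrite chainD; [|exact: diff_snd|exact: dh1].
rewrite D_snd DR1 // (Dv (isig_derive tS)).
have -> : (fun q => A (zc S q) 0 k) = (fun y => A y 0 k) \o zc S by [].
rewrite chainD; [|exact: dzc|exact: dAk].
rewrite (D_zc _ tS) !DdirD // !DdirZ // !DAk // !scaleRE /=.
Qed.

Lemma cont_add (f g : R * R -> R) q : {for q, continuous f} -> {for q, continuous g} ->
  {for q, continuous (fun w => f w + g w)}.
Proof. by move=> cf cg; exact: continuousD. Qed.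
Lemma cont_mul (f g : R * R -> R) q : {for q, continuous f} -> {for q, continuous g} ->
  {for q, continuous (fun w => f w * g w)}.
Proof. by move=> cf cg; exact: continuousM. Qed.
Lemma cont_opp (f : R * R -> R) q : {for q, continuous f} ->
  {for q, continuous (fun w => - f w)}.
Proof. by move=> cf; exact: continuousN. Qed.
Lemma cont_inv (f : R * R -> R) q : f q != 0 -> {for q, continuous f} ->
  {for q, continuous (fun w => (f w)^-1)}.
Proof. by move=> fq cf; exact: continuousV. Qed.
Lemma cont_cst (c : R) (q : R * R) : {for q, continuous (fun _ : R * R => c)}.
Proof. exact: cvg_cst. Qed.
Lemma cont_exp (f : R * R -> R) q n : {for q, continuous f} ->
  {for q, continuous (fun w => f w ^+ n)}.
Proof.
move=> cf; elim: n => [|n IH]; first exact: cont_cst.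
have -> : (fun w => f w ^+ n.+1) = (fun w => f w * f w ^+ n).
  by apply/funext => w; rewrite exprS.
exact: cont_mul.
Qed.

Lemma open_dom (S : R) : open [set q : R * R | 0 < q.1 /\ - S < q.2 < S].
Proof.
have -> : [set q : R * R | 0 < q.1 /\ - S < q.2 < S] =
    (fst @^-1` [set x | 0 < x]) `&` ((snd @^-1` [set x | - S < x]) `&` (snd @^-1` [set x | x < S])).
  apply/seteqP; split => q /=.
  - by move=> [-> /andP[-> ->]].
  - by move=> [-> [-> ->]].
apply: openI; [|apply: openI].
- by apply: open_comp; [move=> x _; exact: cvg_fst | exact: open_gt].
- by apply: open_comp; [move=> x _; exact: cvg_snd | exact: open_gt].
- by apply: open_comp; [move=> x _; exact: cvg_snd | exact: open_lt].
Qed.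

Lemma C1_G (S : R) (A : PS R -> vec R) (U : set (PS R)) (k : 'I_3) :
  0 < S -> Gamma S `<=` U -> C1_on U A ->
  C1_on [set q : R * R | 0 < q.1 /\ - S < q.2 < S]
    (fun q => A (zc S q) 0 k / sig S q.2).
Proof.
move=> S0 GU [oU [dA cA]].
set D := [set q : R * R | 0 < q.1 /\ - S < q.2 < S].
have oD : open D by exact: open_dom.
have dAz q : - S < q.2 < S -> differentiable A (zc S q).
  by move=> tS; apply: dA; apply: GU; exact: Gamma_zc.
have dF q : - S < q.2 < S -> differentiable (fun q => A (zc S q) 0 k) q.
  move=> tS; exact: (differentiable_comp (dzc tS) (diff_coord k (dAz q tS))).
have dH q : - S < q.2 < S -> differentiable (fun q : R * R => (sig S q.2)^-1) q.
  move=> tS; apply: differentiableV; first exact: dsig2.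
  by rewrite gt_eqF // sig_gt0.
split => //; split.
  move=> q [_ tS].
  have E : (fun q => A (zc S q) 0 k / sig S q.2) =
      (fun q => A (zc S q) 0 k) * (fun q : R * R => (sig S q.2)^-1).
    by apply/funext => q'.
  by rewrite E; apply: differentiableM; [exact: dF | exact: dH].
move=> v q Dq; have [q1 tS] := Dq.
pose E w := A (zc S w) 0 k * (v.2 * (w.2 / sig S w.2 ^+ 3))
    + (sig S w.2)^-1 * (v.1 * ('D_(ep o2) A (zc S w)) 0 k
        + v.2 * (- w.2 / sig S w.2) * ('D_(es o0) A (zc S w)) 0 k
        + v.2 * ('D_(es o2) A (zc S w)) 0 k).
have EE w : D w -> 'D_v (fun q => A (zc S q) 0 k / sig S q.2) w = E w.
  by move=> [_ tw]; rewrite DG //; exact: dAz.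
have cE : {for q, continuous E}.
  have sq : sig S q.2 != 0 by rewrite gt_eqF // sig_gt0.
  have cF : {for q, continuous (fun w => A (zc S w) 0 k)}.
    exact: differentiable_continuous (dF q tS).
  have cH : {for q, continuous (fun w : R * R => (sig S w.2)^-1)}.
    exact: differentiable_continuous (dH q tS).
  have csig : {for q, continuous (fun w : R * R => sig S w.2)}.
    exact: differentiable_continuous (dsig2 tS).
  have c_snd : {for q, continuous (fun w : R * R => w.2)} by exact: cvg_snd.
  have cDA e : {for q, continuous (fun w => ('D_e A (zc S w)) 0 k)}.
    have cz : {for q, continuous (zc S)} by exact: differentiable_continuous (dzc tS).
    have c2 := continuous_comp (cA e _ (GU _ (Gamma_zc S0 tS)))
       (@coord_continuous R 1 3 0 k ('D_e A (zc S q))).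
    exact: (continuous_comp cz c2).
  rewrite /E.
  apply: cont_add.
  - apply: cont_mul; first exact: cF.
    apply: cont_mul; first exact: cont_cst.
    apply: cont_mul; first exact: c_snd.
    by apply: cont_inv; [rewrite expf_neq0 | exact: cont_exp].
  - apply: cont_mul; first exact: cH.
    apply: cont_add; first apply: cont_add.
    + by apply: cont_mul; [exact: cont_cst | exact: cDA].
    + apply: cont_mul; last exact: cDA.
      apply: cont_mul; first exact: cont_cst.
      by apply: cont_mul; [exact: cont_opp | exact: cont_inv].
    + by apply: cont_mul; [exact: cont_cst | exact: cDA].
have nD : \forall w \near q, D w.
  by apply: open_nbhs_nbhs; split.
have cE' : E @ q --> 'D_v (fun q => A (zc S q) 0 k / sig S q.2) q.
  by rewrite EE.
apply: cvg_trans cE'; apply: near_eq_cvg; near=> w.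
by rewrite /= EE //; near: w.
Unshelve. all: by end_near.
Qed.
End H6.


Lemma C1_neg (R : realType) (D : set (R * R)) (f : R * R -> R) :
  C1_on D f -> C1_on D (fun q => - f q).
Proof.
move=> [oD [df cf]]; split => //; split.
  by move=> z Dz; apply: differentiableN; exact: df.
move=> v q Dq.
have EE w : D w -> 'D_v (fun q => - f q) w = - 'D_v f w.
  move=> Dw; rewrite (_ : (fun q => - f q) = - f) //.
  by rewrite deriveN //; apply: diff_derivable; exact: df.
have cE : (fun w => - 'D_v f w) @ q --> 'D_v (fun q => - f q) q.
  by rewrite EE //; exact: (continuousN (cf v q Dq)).
have nD : \forall w \near q, D w by apply: open_nbhs_nbhs; split.
apply: cvg_trans cE; apply: near_eq_cvg; near=> w.
by rewrite /= EE //; near: w.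
Unshelve. all: by end_near.
Qed.

Unset Implicit Arguments.

Theorem mainTheorem11 (R : realType) (c m S : R) (hc : 0 < c) (hm : 0 < m)
  (hS : 0 < S) (A : PS R -> 'rV[R]_3) :
  (exists U : set (PS R), Gamma S `<=` U /\ C1_on U A) ->
  (forall (a b : 'I_3) z, Gamma S z ->
      pb (Pgen a) (fun w => A w 0 b) z = 0) ->
  (forall (a b c' : 'I_3) z, Gamma S z ->
      pb (Jgen a b) (fun w => A w 0 c') z
      = kdelta a c' * A z 0 b - kdelta b c' * A z 0 a) ->
  (forall z, Gamma S z -> dot (A z) (pof z) = 0) ->
  exists B C : R * R -> R,
    C1_on [set q : R * R | 0 < q.1 /\ - S < q.2 < S] B /\
    C1_on [set q : R * R | 0 < q.1 /\ - S < q.2 < S] C /\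
    forall z, Gamma_good S z ->
      A z = B (enorm (pof z), dot (phat z) (sof z)) *: cross (phat z) (sof z)
          + C (enorm (pof z), dot (phat z) (sof z))
              *: cross (phat z) (cross (phat z) (sof z)).
Proof.
move=> [U [GU C1A]] HP HJ Hd.
exists (Bf S A), (Cf S A); split; [|split].
- exact: (C1_G (@Ordinal 3 1 isT) hS GU C1A).
- have -> : Cf S A = (fun q => - (A (zc S q) 0 (@Ordinal 3 0 isT) / sig S q.2)).
    by apply/funext => q; rewrite /Cf mulNr.
  exact: (C1_neg (C1_G (@Ordinal 3 0 isT) hS GU C1A)).
- have dA z : Gamma S z -> differentiable A z.
    by move=> Gz; have [_ [dA _]] := C1A; apply: dA; apply: GU.
  move=> z Gz.
  apply: (reduce dA HP HJ _ Gz) => q q1 tS.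
  by apply: P_canon => //; apply: Hd; apply: Gamma_zc.
Qed.
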